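(* Let $X$ be a compact metric space containing a free topological $n$-ball with $n\ge 2$. Then there exists a homeomorphism $f$ of $X$ onto itself and a point $x\in X$ such that $\omega_f(x)$ is infinite and consists of fixed points of $f$. In particular, $X$ does not have the $\omega$-FTP property.
   Context: $B_n=\{x\in\mathbb{R}^n:\|x\|\le1\}$ with Euclidean norm, $\mathrm{int}(B_n)=\{\|x\|<1\}$. A topological $n$-ball is a space homeomorphic to $B_n$; a topological $n$-ball $B\subset X$ is free in $X$ if $h(\mathrm{int}(B_n))$ is open in $X$ for a homeomorphism $h:B_n\to B$. For continuous $f:X\to X$, $\omega_f(x)=\{y:\ \exists\, n_i\to+\infty,\ f^{n_i}(x)\to y\}$, totally periodic if all its points are periodic. $X$ has the $\omega$-FTP property if for every continuous $f:X\to X$, every totally periodic $\omega$-limit set is finite. *)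

(* Defs.v *)
From HB Require Import structures.
From mathcomp Require Import all_boot all_order all_algebra.
From mathcomp Require Import all_classical all_reals all_analysis.
Set Implicit Arguments. Unset Strict Implicit. Unset Printing Implicit Defensive.
Import Order.TTheory GRing.Theory Num.Theory.
Import numFieldNormedType.Exports.
Local Open Scope classical_set_scope.
Local Open Scope ring_scope.

(* Euclidean closed unit ball B_n and its interior in R^n = 'rV[R]_n.
   The (product) topology of 'rV[R]_n is the Euclidean topology. *)
Definition sqnorm {R : realType} {n : nat} (x : 'rV[R]_n) : R :=
  \sum_(i < n) x ord0 i ^+ 2.

Definition closed_ball_n (R : realType) (n : nat) : set 'rV[R]_n :=
  [set x | Num.sqrt (sqnorm x) <= 1].
Arguments closed_ball_n : clear implicits.

Definition open_ball_n (R : realType) (n : nat) : set 'rV[R]_n :=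
  [set x | Num.sqrt (sqnorm x) < 1].
Arguments open_ball_n : clear implicits.

Definition homeo_onto {R : realType} {n : nat} {X : topologicalType}
  (h : 'rV[R]_n -> X) (B : set X) : Prop :=
  exists g : X -> 'rV[R]_n,
    [/\ {within closed_ball_n R n, continuous h},
        {within B, continuous g},
        h @` closed_ball_n R n = B /\ g @` B `<=` closed_ball_n R n,
        (forall x, closed_ball_n R n x -> g (h x) = x) &
        (forall y, B y -> h (g y) = y)].

Arguments homeo_onto {R n X} h B.

Definition top_ball (R : realType) (n : nat) {X : topologicalType} (B : set X) : Prop :=
  exists h : 'rV[R]_n -> X, homeo_onto h B.

Arguments top_ball R n {X} B.

Definition free_ball (R : realType) (n : nat) {X : topologicalType} (B : set X) : Prop :=
  exists h : 'rV[R]_n -> X, homeo_onto h B /\ open (h @` open_ball_n R n).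

Arguments free_ball R n {X} B.

Definition self_homeo {X : topologicalType} (f : X -> X) : Prop :=
  exists g : X -> X, [/\ continuous f, continuous g, cancel f g & cancel g f].

Definition omega_lim {X : topologicalType} (f : X -> X) (x : X) : set X :=
  [set y | exists phi : nat -> nat,
      (forall N, exists M, forall i, (M <= i)%N -> (N <= phi i)%N) /\
      ((fun i => iter (phi i) f x) @ \oo --> y)].

Definition periodic_pt {X : Type} (f : X -> X) (y : X) : Prop :=
  exists k, (0 < k)%N /\ iter k f y = y.

Definition omega_FTP (X : topologicalType) : Prop :=
  forall f : X -> X, continuous f -> forall x : X,
    (forall y, omega_lim f x y -> periodic_pt f y) -> finite_set (omega_lim f x).

(* Main.v *)
Require Import Defs.
From HB Require Import structures.
From mathcomp Require Import all_boot all_order all_algebra.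
From mathcomp Require Import all_classical all_reals all_analysis.
From mathcomp Require Import ring lra.
Set Implicit Arguments. Unset Strict Implicit. Unset Printing Implicit Defensive.
Import Order.TTheory GRing.Theory Num.Theory.
Import numFieldNormedType.Exports.
Local Open Scope classical_set_scope.
Local Open Scope ring_scope.

Section Real.
Variable R : realType.
Implicit Types (u v r : R).

Lemma le_div2 (a b c d : R) : 0 < b -> 0 < d -> (a / b <= c / d) = (a * d <= c * b).
Proof. move=> b0 d0. by rewrite ler_pdivrMr // mulrAC ler_pdivlMr. Qed.

Definition clamp01 (x : R) : R := Num.min 1 (Num.max 0 x).
Definition uu r : R := clamp01 (4 * r - 1).
Definition phi u : R := Num.min (2 * u / (1 + u)) (1 / (2 - u)).
Definition phiinv v : R := Num.max (v / (2 - v)) (2 - 1 / Num.max v (1/2)).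

Ltac eqlra := apply/eqP; rewrite eq_le; apply/andP; split; lra.
Lemma clamp01_id x : 0 <= x <= 1 -> clamp01 x = x.
Proof.
move=> /andP[x0 x1]; rewrite /clamp01 (maxEle 0 x); case: (lerP 0 x) => h1;
  rewrite minEle; case: lerP => h2; eqlra.
Qed.
Lemma clamp01_le0 x : x <= 0 -> clamp01 x = 0.
Proof.
move=> x0; rewrite /clamp01 (maxEle 0 x); case: (lerP 0 x) => h1;
  rewrite minEle; case: lerP => h2; eqlra.
Qed.
Lemma clamp01_ge1 x : 1 <= x -> clamp01 x = 1.
Proof.
move=> x0; rewrite /clamp01 (maxEle 0 x); case: (lerP 0 x) => h1;
  rewrite minEle; case: lerP => h2; eqlra.
Qed.
Lemma clamp01_in x : 0 <= clamp01 x <= 1.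
Proof.
case: (lerP x 0) => [h|h0]; first by rewrite clamp01_le0 // lexx ler01.
case: (lerP 1 x) => [h|h1]; first by rewrite clamp01_ge1 // lexx ler01.
by rewrite clamp01_id ?(ltW h0) ?(ltW h1).
Qed.
Lemma uu_in r : 0 <= uu r <= 1.
Proof. exact: clamp01_in. Qed.

Lemma phi_lo u : 0 <= u <= 1/2 -> phi u = 2 * u / (1 + u).
Proof.
move=> /andP[u0 u1]; rewrite /phi minEle ifT //.
rewrite le_div2; [|lra|lra]. nra.
Qed.
Lemma phi_hi u : 1/2 <= u <= 1 -> phi u = 1 / (2 - u).
Proof.
move=> /andP[u0 u1]; rewrite /phi minEle.
case: ifP => // h; apply/eqP; rewrite eq_le h ?andbT ?andTb /= le_div2; [|lra|lra]. nra.
Qed.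
Lemma phiinv_lo v : 0 <= v <= 2/3 -> phiinv v = v / (2 - v).
Proof.
move=> /andP[v0 v1]; rewrite /phiinv (maxEle v).
case: (lerP v (1/2)) => hv.
  have -> : 2 - 1 / (1/2) = 0 :> R by field.
  rewrite maxEle; case: ifP => // h; apply/eqP; rewrite eq_le h ?andbT ?andTb /=. apply: divr_ge0 => //; lra.
rewrite (_ : 2 - 1 / v = (2 * v - 1) / v); last by field; lra.
rewrite maxEle; case: ifP => // h; apply/eqP; rewrite eq_le h ?andbT ?andTb /= le_div2; [|lra|lra]. nra.
Qed.
Lemma phiinv_hi v : 2/3 <= v <= 1 -> phiinv v = 2 - 1 / v.
Proof.
move=> /andP[v0 v1]; rewrite /phiinv (maxEle v).
have -> : (v <= 1/2) = false by apply/negbTE; rewrite -ltNge; lra.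
rewrite (_ : 2 - 1 / v = (2 * v - 1) / v); last by field; lra.
rewrite maxEle ifT // le_div2; [|lra|lra]. nra.
Qed.

Lemma phi_in u : 0 <= u <= 1 -> 0 <= phi u <= 1.
Proof.
move=> /andP[u0 u1]; case: (lerP u (1/2)) => h.
  rewrite phi_lo ?u0 //; apply/andP; split; first by apply: divr_ge0; lra.
  rewrite ler_pdivrMr; lra.
rewrite phi_hi; last lra.
apply/andP; split; first by apply: divr_ge0; lra.
rewrite ler_pdivrMr; lra.
Qed.
Lemma phiinv_in v : 0 <= v <= 1 -> 0 <= phiinv v <= 1.
Proof.
move=> /andP[v0 v1]; case: (lerP v (2/3)) => h.
  rewrite phiinv_lo ?v0 //; apply/andP; split; first by apply: divr_ge0; lra.
  rewrite ler_pdivrMr; lra.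
rewrite phiinv_hi; last lra.
rewrite (_ : 2 - 1 / v = (2 * v - 1) / v); last by field; lra.
apply/andP; split; first by apply: divr_ge0; lra.
rewrite ler_pdivrMr; lra.
Qed.

Lemma phiinvK u : 0 <= u <= 1 -> phiinv (phi u) = u.
Proof.
move=> /andP[u0 u1]; case: (lerP u (1/2)) => h.
  rewrite phi_lo ?u0 // phiinv_lo; first by field; lra.
  apply/andP; split; first by apply: divr_ge0; lra.
  rewrite ler_pdivrMr; lra.
rewrite phi_hi; last lra.
rewrite phiinv_hi; first by field; lra.
apply/andP; split; last by rewrite ler_pdivrMr; lra.
rewrite ler_pdivlMr; lra.
Qed.
Lemma phiK v : 0 <= v <= 1 -> phi (phiinv v) = v.
Proof.
move=> /andP[v0 v1]; case: (lerP v (2/3)) => h.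
  rewrite phiinv_lo ?v0 // phi_lo; first by field; lra.
  apply/andP; split; first by apply: divr_ge0; lra.
  rewrite ler_pdivrMr; lra.
rewrite phiinv_hi; last lra.
rewrite (_ : 2 - 1 / v = (2 * v - 1) / v); last by field; lra.
rewrite phi_hi; first by field; lra.
apply/andP; split; last by rewrite ler_pdivrMr; lra.
rewrite ler_pdivlMr; lra.
Qed.

Lemma phi0 : phi 0 = 0.
Proof. by rewrite phi_lo ?mulr0 ?mul0r //; apply/andP; split => //; lra. Qed.
Lemma phi1 : phi 1 = 1.
Proof. by rewrite phi_hi; last lra; field. Qed.
Lemma phiinv0 : phiinv 0 = 0.
Proof. by rewrite phiinv_lo ?mul0r //; apply/andP; split => //; lra. Qed.
Lemma phiinv1 : phiinv 1 = 1.
Proof. rewrite phiinv_hi; last lra. by field. Qed.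

End Real.

Section Real2.
Variable R : realType.
Implicit Types (u v r : R).
Ltac eqlra := apply/eqP; rewrite eq_le; apply/andP; split; lra.

Lemma cid (x : R) : {for x, continuous (fun y : R => y)}.
Proof. exact: cvg_id. Qed.
Lemma ccst (x c : R) : {for x, continuous (fun _ : R => c)}.
Proof. exact: cst_continuous. Qed.

Lemma phi_cont (u : R) : 0 <= u <= 1 -> {for u, continuous (@phi R)}.
Proof.
move=> /andP[u0 u1].
apply: continuous_min.
  apply: continuousM; first by apply: continuousM; [exact: ccst| exact: cid].
  apply: continuousV; first by rewrite /=; lra.
  apply: continuousD; [exact: ccst| exact: cid].
apply: continuousM; first exact: ccst.
apply: continuousV; first by rewrite /=; lra.
apply: continuousB; [exact: ccst| exact: cid].
Qed.

Lemma phiinv_cont (u : R) : 0 <= u <= 1 -> {for u, continuous (@phiinv R)}.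
Proof.
move=> /andP[u0 u1].
apply: continuous_max.
  apply: continuousM; first exact: cid.
  apply: continuousV; first by rewrite /=; lra.
  apply: continuousB; [exact: ccst| exact: cid].
apply: continuousB; first exact: ccst.
apply: continuousM; first exact: ccst.
apply: continuousV.
  by apply: lt0r_neq0; rewrite /= lt_max; apply/orP; right; lra.
apply: continuous_max; [exact: cid | exact: ccst].
Qed.

Lemma clamp01_cont (x : R) : {for x, continuous (@clamp01 R)}.
Proof.
 apply: continuous_min; first exact: ccst.
apply: continuous_max; [exact: ccst | exact: cid].
Qed.

Lemma uu_cont (x : R) : {for x, continuous (@uu R)}.
Proof.
 apply: (@continuous_comp _ _ _ (fun r : R => 4 * r - 1) (@clamp01 R)).
  apply: continuousB; last exact: ccst.
  apply: continuousM; [exact: ccst| exact: cid].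
exact: clamp01_cont.
Qed.

Lemma uu_lo r : r <= 1/4 -> uu r = 0.
Proof. by move=> h; rewrite /uu clamp01_le0 //; lra. Qed.
Lemma uu_hi r : 1/2 <= r -> uu r = 1.
Proof. by move=> h; rewrite /uu clamp01_ge1 //; lra. Qed.
Lemma uu_mid r : 1/4 <= r <= 1/2 -> uu r = 4 * r - 1.
Proof. by move=> /andP[h1 h2]; rewrite /uu clamp01_id //; apply/andP; split; lra. Qed.

Definition rho r : R := r + (phi (uu r) - uu r) / 4.
Definition rhoinv r : R := r + (phiinv (uu r) - uu r) / 4.
Definition lam r : R := 1 + (phi (uu r) - uu r) / (4 * Num.max r (1/4)).
Definition laminv r : R := 1 + (phiinv (uu r) - uu r) / (4 * Num.max r (1/4)).

Lemma uu_rho r : uu (rho r) = phi (uu r).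
Proof.
rewrite /rho; case: (lerP r (1/4)) => h1.
  by rewrite (uu_lo h1) phi0 subrr mul0r addr0 uu_lo.
case: (lerP (1/2) r) => h2.
  by rewrite (uu_hi h2) phi1 subrr mul0r addr0 uu_hi // ltW.
have hm : 1/4 <= r <= 1/2 by apply/andP; split; lra.
have := phi_in (uu_in r); rewrite (uu_mid hm) => /andP[p0 p1].
rewrite uu_mid; first by field.
apply/andP; split; lra.
Qed.
Lemma uu_rhoinv r : uu (rhoinv r) = phiinv (uu r).
Proof.
rewrite /rhoinv; case: (lerP r (1/4)) => h1.
  by rewrite (uu_lo h1) phiinv0 subrr mul0r addr0 uu_lo.
case: (lerP (1/2) r) => h2.
  by rewrite (uu_hi h2) phiinv1 subrr mul0r addr0 uu_hi // ltW.
have hm : 1/4 <= r <= 1/2 by apply/andP; split; lra.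
have := phiinv_in (uu_in r); rewrite (uu_mid hm) => /andP[p0 p1].
rewrite uu_mid; first by field.
apply/andP; split; lra.
Qed.

Lemma rhoK r : rhoinv (rho r) = r.
Proof.
by rewrite /rhoinv uu_rho phiinvK ?uu_in // /rho; field.
Qed.
Lemma rhoinvK r : rho (rhoinv r) = r.
Proof.
by rewrite /rho uu_rhoinv phiK ?uu_in // /rhoinv; field.
Qed.

Lemma lam_mul r : 0 <= r -> lam r * r = rho r.
Proof.
move=> r0; rewrite /lam /rho maxEle; case: ifP => h.
  by rewrite (uu_lo h) phi0 subrr !mul0r !addr0 mul1r.
have hr : 0 < r by move/negbT: h; rewrite -ltNge; lra.
by field; lra.
Qed.
Lemma laminv_mul r : 0 <= r -> laminv r * r = rhoinv r.
Proof.
move=> r0; rewrite /laminv /rhoinv maxEle; case: ifP => h.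
  by rewrite (uu_lo h) phiinv0 subrr !mul0r !addr0 mul1r.
have hr : 0 < r by move/negbT: h; rewrite -ltNge; lra.
by field; lra.
Qed.

Lemma rho_ge0 r : 0 <= r -> 0 <= rho r.
Proof.
move=> r0; rewrite /rho; case: (lerP r (1/4)) => h1.
  by rewrite uu_lo // phi0 subrr mul0r addr0.
have /andP[a b] := phi_in (uu_in r); have /andP[c d] := uu_in r; lra.
Qed.
Lemma rhoinv_ge0 r : 0 <= r -> 0 <= rhoinv r.
Proof.
move=> r0; rewrite /rhoinv; case: (lerP r (1/4)) => h1.
  by rewrite uu_lo // phiinv0 subrr mul0r addr0.
have /andP[a b] := phiinv_in (uu_in r); have /andP[c d] := uu_in r; lra.
Qed.

Lemma lam_ge0 r : 0 <= r -> 0 <= lam r.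
Proof.
move=> r0; case: (lerP r (1/4)) => h1.
  by rewrite /lam uu_lo // phi0 subrr mul0r addr0.
have : 0 <= lam r * r by rewrite lam_mul // rho_ge0.
by rewrite pmulr_lge0 //; lra.
Qed.
Lemma laminv_ge0 r : 0 <= r -> 0 <= laminv r.
Proof.
move=> r0; case: (lerP r (1/4)) => h1.
  by rewrite /laminv uu_lo // phiinv0 subrr mul0r addr0.
have : 0 <= laminv r * r by rewrite laminv_mul // rhoinv_ge0.
by rewrite pmulr_lge0 //; lra.
Qed.

Lemma lam_hi r : 1/2 <= r -> lam r = 1.
Proof. by move=> h; rewrite /lam uu_hi // phi1 subrr mul0r addr0. Qed.
Lemma laminv_hi r : 1/2 <= r -> laminv r = 1.
Proof. by move=> h; rewrite /laminv uu_hi // phiinv1 subrr mul0r addr0. Qed.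

Lemma rho_le r : 0 <= r <= 1/2 -> rho r <= 1/2.
Proof.
move=> /andP[r0 r1]; rewrite /rho; case: (lerP r (1/4)) => h1.
  rewrite uu_lo // phi0 subrr mul0r addr0; lra.
have hm : 1/4 <= r <= 1/2 by apply/andP; split; lra.
have := phi_in (uu_in r); rewrite (uu_mid hm) => /andP[p0 p1]; lra.
Qed.

Lemma lam_cont (r : R) : {for r, continuous lam}.
Proof.
rewrite /lam; apply: continuousD; first exact: ccst.
apply: continuousM.
  apply: continuousB; last exact: uu_cont.
  apply: (@continuous_comp _ _ _ (@uu R) (@phi R)); first exact: uu_cont.
  exact/phi_cont/uu_in.
apply: continuousV.
  by apply: lt0r_neq0; rewrite /= pmulr_rgt0 ?lt_max //; apply/orP; right; lra.
apply: continuousM; first exact: ccst.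
apply: continuous_max; [exact: cid | exact: ccst].
Qed.
Lemma laminv_cont (r : R) : {for r, continuous laminv}.
Proof.
rewrite /laminv; apply: continuousD; first exact: ccst.
apply: continuousM.
  apply: continuousB; last exact: uu_cont.
  apply: (@continuous_comp _ _ _ (@uu R) (@phiinv R)); first exact: uu_cont.
  exact/phiinv_cont/uu_in.
apply: continuousV.
  by apply: lt0r_neq0; rewrite /= pmulr_rgt0 ?lt_max //; apply/orP; right; lra.
apply: continuousM; first exact: ccst.
apply: continuous_max; [exact: cid | exact: ccst].
Qed.

End Real2.

Section Real3.
Variable R : realType.
Implicit Types (u v r : R).
Ltac eqlra := apply/eqP; rewrite eq_le; apply/andP; split; lra.

Definition TT : R := pi *+ 2.
Definition alpha u : R := TT * Num.min 1 (2 * u) * Num.sqrt (1 - u) / (1 + Num.sqrt u).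
Definition beta r : R := alpha (uu r).

Lemma alpha_cont u : {for u, continuous alpha}.
Proof.
rewrite /alpha; apply: continuousM.
  apply: continuousM; first apply: continuousM; first exact: cst_continuous.
    apply: continuous_min; first exact: cst_continuous.
    apply: continuousM; [exact: cst_continuous | exact: cvg_id].
  apply: (@continuous_comp _ _ _ (fun u : R => 1 - u) (@Num.sqrt R)).
    apply: continuousB; [exact: cst_continuous | exact: cvg_id].
  exact: sqrt_continuous.
apply: continuousV.
  by apply: lt0r_neq0; rewrite /=; have := sqrtr_ge0 u; lra.
apply: continuousD; first exact: cst_continuous.
exact: sqrt_continuous.
Qed.

Lemma beta_cont r : {for r, continuous beta}.
Proof.
apply: (@continuous_comp _ _ _ (@uu R) alpha); first exact: uu_cont.
exact: alpha_cont.
Qed.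

Lemma beta_hi r : 1/2 <= r -> beta r = 0.
Proof. by move=> h; rewrite /beta uu_hi // /alpha subrr sqrtr0 !mulr0 mul0r. Qed.

Lemma nS1 k : (k.+1%:R : R) = k%:R + 1. Proof. by rewrite -natr1. Qed.
Lemma nS2 k : (k.+2%:R : R) = k%:R + 2. Proof. by rewrite -addn2 natrD. Qed.
Lemma nS3 k : (k.+3%:R : R) = k%:R + 3. Proof. by rewrite -addn3 natrD. Qed.

Definition uk (k : nat) : R := k.+1%:R / k.+2%:R.
Definition sk (k : nat) : R := 1/4 + uk k / 4.

Lemma uk_in k : 1/2 <= uk k < 1.
Proof.
rewrite /uk; have h : (0 : R) < k.+2%:R by rewrite ltr0n.
rewrite ler_pdivlMr // ltr_pdivrMr // ?(nS3 k) ?(nS2 k) ?(nS1 k); have h0 := ler0n R k; apply/andP; split; lra.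
Qed.

Lemma uu_sk k : uu (sk k) = uk k.
Proof.
have /andP[a b] := uk_in k.
rewrite uu_mid /sk; first by field.
apply/andP; split; lra.
Qed.

Lemma phi_uk k : phi (uk k) = uk k.+1.
Proof.
have /andP[a b] := uk_in k.
rewrite phi_hi; last by apply/andP; split; lra.
rewrite /uk ?(nS3 k) ?(nS2 k) ?(nS1 k); have := ler0n R k => h.
field; apply/andP; split; apply: lt0r_neq0; lra.
Qed.

Lemma rho_sk k : rho (sk k) = sk k.+1.
Proof. by rewrite /rho uu_sk phi_uk /sk; field. Qed.

Lemma sk_in k : 3/8 <= sk k < 1/2.
Proof. have /andP[a b] := uk_in k; rewrite /sk; apply/andP; split; lra. Qed.

Lemma lam_sk k : lam (sk k) * sk k = sk k.+1.
Proof. have /andP[a b] := sk_in k; by rewrite lam_mul ?rho_sk //; lra. Qed.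

Lemma beta_sk k :
  beta (sk k) = TT * (Num.sqrt (k.+2%:R) - Num.sqrt (k.+1%:R)).
Proof.
rewrite /beta uu_sk /alpha.
have /andP[a b] := uk_in k.
have -> : Num.min 1 (2 * uk k) = 1 by rewrite minEle ifT //; lra.
set A := Num.sqrt (k.+2%:R : R); set B := Num.sqrt (k.+1%:R : R).
have A0 : 0 < A by rewrite sqrtr_gt0 ltr0n.
have B0 : 0 <= B by rewrite sqrtr_ge0.
have A2 : A ^+ 2 = k.+2%:R by rewrite sqr_sqrtr // ler0n.
have B2 : B ^+ 2 = k.+1%:R by rewrite sqr_sqrtr // ler0n.
have e1 : 1 - uk k = (A^-1) ^+ 2.
  rewrite exprVn A2 /uk ?(nS3 k) ?(nS2 k) ?(nS1 k); have := ler0n R k => h; field; apply: lt0r_neq0; lra.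
have e2 : uk k = (B / A) ^+ 2.
  rewrite expr_div_n A2 B2 /uk.
  done.
rewrite e1 e2 !sqrtr_sqr !ger0_norm ?invr_ge0 ?divr_ge0 ?(ltW A0) //.
have AB : A ^+ 2 - B ^+ 2 = 1 by rewrite A2 B2 ?(nS3 k) ?(nS2 k) ?(nS1 k); lra.
have ABp : 0 < A + B by lra.
rewrite mulr1 -mulrA.
have e3 : A^-1 / (1 + B / A) = (A + B)^-1.
  field; apply/andP; split; apply: lt0r_neq0 => //.
have e4 : A - B = (A + B)^-1.
  rewrite -[(A + B)^-1]mul1r -AB; field; apply: lt0r_neq0 => //.
by rewrite e3 e4.
Qed.

End Real3.

Section Vec.
Variable R : realType.
Variable n : nat.
Variables i0 i1 : 'I_n.
Hypothesis hi : i0 != i1.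
Let hi' : i1 != i0. Proof. by rewrite eq_sym. Qed.
Local Notation V := ('rV[R]_n).
Implicit Types (x y : V) (a b : R).

Lemma cont_sum (T : topologicalType) (I : Type) (r : seq I) (F : I -> T -> R) (x : T) :
  (forall i, {for x, continuous (F i)}) ->
  {for x, continuous (fun y : T => \sum_(i <- r) F i y)}.
Proof.
move=> hF; elim: r => [|i r IH].
  have -> : (fun y : T => \sum_(i <- [::]) F i y) = fun _ => 0.
    by apply: funext => y; rewrite big_nil.
  exact: cst_continuous.
have -> : (fun y : T => \sum_(j <- i :: r) F j y) = (fun y : T => F i y + \sum_(j <- r) F j y).
  by apply: funext => y; rewrite big_cons.
exact: continuousD.
Qed.

Definition Nm x : R := Num.sqrt (sqnorm x).

Lemma sqnorm_ge0 x : 0 <= sqnorm x.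
Proof. by rewrite /sqnorm; apply: sumr_ge0 => i _; rewrite sqr_ge0. Qed.
Lemma Nm_ge0 x : 0 <= Nm x.
Proof. exact: sqrtr_ge0. Qed.

Lemma Nm_cont x : {for x, continuous Nm}.
Proof.
apply: (@continuous_comp _ _ _ (@sqnorm R n) (@Num.sqrt R)); last exact: sqrt_continuous.
rewrite /sqnorm; apply: cont_sum => i.
apply: continuousM; exact: coord_continuous.
Qed.

Lemma sqnormZ c x : sqnorm (c *: x) = c ^+ 2 * sqnorm x.
Proof.
rewrite /sqnorm mulr_sumr; apply: eq_bigr => i _; rewrite mxE; ring.
Qed.

Lemma NmZ c x : Nm (c *: x) = `|c| * Nm x.
Proof. by rewrite /Nm sqnormZ sqrtrM ?sqr_ge0 // sqrtr_sqr. Qed.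

Definition e0 : V := delta_mx 0 i0.
Definition e1 : V := delta_mx 0 i1.
Definition Pm x : V := x ord0 i0 *: e0 + x ord0 i1 *: e1.
Definition Jm x : V := x ord0 i0 *: e1 - x ord0 i1 *: e0.
Definition Rot a x : V := x + (cos a - 1) *: Pm x + sin a *: Jm x.

Lemma e0E j : e0 ord0 j = (j == i0)%:R.
Proof. by rewrite /e0 mxE eqxx. Qed.
Lemma e1E j : e1 ord0 j = (j == i1)%:R.
Proof. by rewrite /e1 mxE eqxx. Qed.

Lemma Rot_coord a x j : (Rot a x) ord0 j =
  if j == i0 then cos a * x ord0 i0 - sin a * x ord0 i1
  else if j == i1 then sin a * x ord0 i0 + cos a * x ord0 i1
  else x ord0 j.
Proof.
rewrite /Rot /Pm /Jm !mxE ?eqxx /=.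
case: (eqVneq j i0) => [->|h0].
  rewrite ?eqxx ?(negbTE hi) /=; ring.
case: (eqVneq j i1) => [->|h1] /=; ring.
Qed.

Lemma sqnorm_Rot a x : sqnorm (Rot a x) = sqnorm x.
Proof.
rewrite /sqnorm (bigD1 i0) // [in RHS](bigD1 i0) //=.
rewrite (bigD1 i1) //= [in RHS](bigD1 i1) //=.
rewrite !Rot_coord ?eqxx ?(negbTE hi) ?(negbTE hi') /=.
have -> : \sum_(i < n | (i != i0) && (i != i1)) Rot a x ord0 i ^+ 2 =
          \sum_(i < n | (i != i0) && (i != i1)) x ord0 i ^+ 2.
  apply: eq_bigr => i /andP[h0 h1]; by rewrite Rot_coord (negbTE h0) (negbTE h1).
have h := cos2Dsin2 a.
rewrite !addrA; congr (_ + _).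
set c := cos a in h *; set s := sin a in h *.
set u := x ord0 i0; set v := x ord0 i1.
have -> : (c * u - s * v) ^+ 2 + (s * u + c * v) ^+ 2 = (c^+2 + s^+2) * (u^+2 + v^+2) by ring.
by rewrite h mul1r.
Qed.

Lemma Nm_Rot a x : Nm (Rot a x) = Nm x.
Proof. by rewrite /Nm sqnorm_Rot. Qed.

Lemma RotD a b x : Rot a (Rot b x) = Rot (a + b) x.
Proof.
apply/rowP => j; rewrite !Rot_coord ?eqxx ?(negbTE hi) ?(negbTE hi') ?eqxx.
rewrite cosD sinD.
case: (eqVneq j i0) => [_|h0]; first by ring.
case: (eqVneq j i1) => [_|h1]; by [ring|].
Qed.

Lemma Rot0 x : Rot 0 x = x.
Proof. by rewrite /Rot cos0 sin0 subrr !scale0r !addr0. Qed.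

Lemma RotN a x : Rot (- a) (Rot a x) = x.
Proof. by rewrite RotD addNr Rot0. Qed.

Lemma RotZ a c x : Rot a (c *: x) = c *: Rot a x.
Proof. apply/rowP => j; rewrite Rot_coord [in RHS]mxE Rot_coord !mxE; case: ifP => _; [|case: ifP => _]; ring. Qed.

Lemma Rot_e0 a : Rot a e0 = cos a *: e0 + sin a *: e1.
Proof.
apply/rowP => j; rewrite Rot_coord !mxE ?eqxx /= ?eqxx ?(negbTE hi) ?(negbTE hi') /=.
case: (eqVneq j i0) => [e|h0]; first by rewrite ?e ?eqxx ?(negbTE hi) /=; ring.
case: (eqVneq j i1) => [e|h1] /=; ring.
Qed.

Lemma sqnorm_e01 c s : sqnorm (c *: e0 + s *: e1) = c ^+ 2 + s ^+ 2.
Proof.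
rewrite /sqnorm (bigD1 i0) // (bigD1 i1) //=.
rewrite big1; last first.
  by move=> i /andP[h0 h1]; rewrite !mxE ?eqxx /= (negbTE h0) (negbTE h1) /=; ring.
rewrite !mxE ?eqxx /= ?eqxx ?(negbTE hi) ?(negbTE hi') /=; ring.
Qed.

Lemma Nm_cs a : Nm (cos a *: e0 + sin a *: e1) = 1.
Proof. by rewrite /Nm sqnorm_e01 cos2Dsin2 sqrtr1. Qed.

Lemma Rot_cont (b : V -> R) x : {for x, continuous b} ->
  {for x, continuous (fun y => Rot (b y) y)}.
Proof.
move=> hb; rewrite /Rot.
apply: continuousD; first apply: continuousD.
- exact: cvg_id.
- apply: continuousZ.
    apply: continuousB; last exact: cst_continuous.
    exact: (@continuous_comp _ _ _ b (@cos R) x hb (@continuous_cos R _)).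
  rewrite /Pm; apply: continuousD; apply: continuousZr_tmp; exact: coord_continuous.
- apply: continuousZ.
    exact: (@continuous_comp _ _ _ b (@sin R) x hb (@continuous_sin R _)).
  rewrite /Jm; apply: continuousB; apply: continuousZr_tmp; exact: coord_continuous.
Qed.

End Vec.

Section Maps.
Variable R : realType.
Variable n : nat.
Variables i0 i1 : 'I_n.
Hypothesis hi : i0 != i1.
Local Notation V := ('rV[R]_n).
Local Notation Rot := (Rot i0 i1).
Local Notation e0 := (e0 R i0).
Local Notation e1 := (e1 R i1).
Implicit Types (x y : V) (a b : R).

Definition Tm x : V := Rot (beta (Nm x)) x.
Definition Tinv x : V := Rot (- beta (Nm x)) x.
Definition Rad x : V := lam (Nm x) *: x.
Definition Radinv x : V := laminv (Nm x) *: x.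
Definition Fm x : V := Rad (Tm x).
Definition Gm x : V := Tinv (Radinv x).

Lemma Nm_Tm x : Nm (Tm x) = Nm x.
Proof. exact: Nm_Rot. Qed.
Lemma Nm_Tinv x : Nm (Tinv x) = Nm x.
Proof. exact: Nm_Rot. Qed.
Lemma TmK x : Tinv (Tm x) = x.
Proof. by rewrite /Tinv Nm_Tm /Tm RotN. Qed.
Lemma TinvK x : Tm (Tinv x) = x.
Proof. by rewrite /Tm Nm_Tinv /Tinv RotD // addrN Rot0. Qed.

Lemma Nm_Rad x : Nm (Rad x) = rho (Nm x).
Proof. by rewrite /Rad NmZ ger0_norm ?lam_ge0 ?Nm_ge0 // lam_mul // Nm_ge0. Qed.
Lemma Nm_Radinv x : Nm (Radinv x) = rhoinv (Nm x).
Proof. by rewrite /Radinv NmZ ger0_norm ?laminv_ge0 ?Nm_ge0 // laminv_mul // Nm_ge0. Qed.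

Lemma rho0 : rho 0 = 0 :> R.
Proof. by rewrite /rho uu_lo ?phi0 ?subrr ?mul0r ?addr0 //; lra. Qed.
Lemma rhoinv0 : rhoinv 0 = 0 :> R.
Proof. by rewrite /rhoinv uu_lo ?phiinv0 ?subrr ?mul0r ?addr0 //; lra. Qed.
Lemma lam0 : lam 0 = 1 :> R.
Proof. by rewrite /lam uu_lo ?phi0 ?subrr ?mul0r ?addr0 //; lra. Qed.
Lemma laminv0 : laminv 0 = 1 :> R.
Proof. by rewrite /laminv uu_lo ?phiinv0 ?subrr ?mul0r ?addr0 //; lra. Qed.

Lemma RadK x : Radinv (Rad x) = x.
Proof.
rewrite /Radinv Nm_Rad /Rad scalerA.
have r0 := Nm_ge0 x; set r := Nm x in r0 *.
case: (eqVneq r 0) => [->|rn0].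
  by rewrite rho0 lam0 laminv0 mulr1 scale1r.
suff -> : laminv (rho r) * lam r = 1 by rewrite scale1r.
have h : laminv (rho r) * lam r * r = r.
  by rewrite -mulrA lam_mul // laminv_mul ?rho_ge0 // rhoK.
by apply: (mulIf rn0); rewrite h mul1r.
Qed.
Lemma RadinvK x : Rad (Radinv x) = x.
Proof.
rewrite /Rad Nm_Radinv /Radinv scalerA.
have r0 := Nm_ge0 x; set r := Nm x in r0 *.
case: (eqVneq r 0) => [->|rn0].
  by rewrite rhoinv0 lam0 laminv0 mulr1 scale1r.
suff -> : lam (rhoinv r) * laminv r = 1 by rewrite scale1r.
have h : lam (rhoinv r) * laminv r * r = r.
  by rewrite -mulrA laminv_mul // lam_mul ?rhoinv_ge0 // rhoinvK.
by apply: (mulIf rn0); rewrite h mul1r.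
Qed.

Lemma FmK x : Gm (Fm x) = x.
Proof. by rewrite /Gm /Fm RadK TmK. Qed.
Lemma GmK x : Fm (Gm x) = x.
Proof. by rewrite /Gm /Fm TinvK RadinvK. Qed.

Lemma Nm_Fm x : Nm (Fm x) = rho (Nm x).
Proof. by rewrite /Fm Nm_Rad Nm_Tm. Qed.

Lemma Fm_fix x : 1/2 <= Nm x -> Fm x = x.
Proof.
move=> h; rewrite /Fm /Rad Nm_Tm lam_hi // scale1r /Tm beta_hi //.
by rewrite Rot0.
Qed.

Lemma Fm_small x : Nm x <= 1/2 -> Nm (Fm x) <= 1/2.
Proof. by move=> h; rewrite Nm_Fm rho_le // Nm_ge0. Qed.

Lemma Fm_cont x : {for x, continuous Fm}.
Proof.
apply: (@continuous_comp _ _ _ Tm Rad).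
  apply: Rot_cont; apply: (@continuous_comp _ _ _ (@Nm R n) (@beta R)).
  exact: Nm_cont. exact: beta_cont.
rewrite /Rad; apply: continuousZ; last exact: cvg_id.
apply: (@continuous_comp _ _ _ (@Nm R n) (@lam R)); [exact: Nm_cont| exact: lam_cont].
Qed.

Lemma Gm_cont x : {for x, continuous Gm}.
Proof.
apply: (@continuous_comp _ _ _ Radinv Tinv).
  rewrite /Radinv; apply: continuousZ; last exact: cvg_id.
  apply: (@continuous_comp _ _ _ (@Nm R n) (@laminv R)); [exact: Nm_cont| exact: laminv_cont].
apply: Rot_cont; apply: continuousN; apply: (@continuous_comp _ _ _ (@Nm R n) (@beta R)).
  exact: Nm_cont. exact: beta_cont.
Qed.

Definition pk (k : nat) : V := sk R k *: Rot (TT R * Num.sqrt (k.+1%:R)) e0.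

Lemma Nm_Rote0 a : Nm (Rot a e0) = 1.
Proof. by rewrite Rot_e0 // Nm_cs. Qed.

Lemma Nm_pk k : Nm (pk k) = sk R k.
Proof.
rewrite /pk NmZ Nm_Rote0 mulr1 ger0_norm //.
by have /andP[a _] := sk_in R k; lra.
Qed.

Lemma Fm_pk k : Fm (pk k) = pk k.+1.
Proof.
rewrite /Fm /Rad Nm_Tm Nm_pk /Tm Nm_pk /pk RotZ // RotD // scalerA lam_sk beta_sk.
by congr (_ *: Rot _ _); ring.
Qed.

Lemma iter_pk k : iter k Fm (pk 0) = pk k.
Proof. by elim: k => // k IH; rewrite iterS IH Fm_pk. Qed.

End Maps.

Section Lims.
Variable R : realType.

Definition diverges (phi : nat -> nat) :=
  forall N, exists M, forall i, (M <= i)%N -> (N <= phi i)%N.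

Lemma sk_lim (phi : nat -> nat) : diverges phi ->
  (fun i => sk R (phi i)) @ \oo --> (1/2 : R).
Proof.
move=> hphi; apply/cvgrPdist_lt => eps e0.
have [N _ hN] := nbhs_infty_ger (eps^-1).
have [M hM] := hphi N.
exists M => // i /= hi.
have hk := hN _ (hM _ hi); set k := phi i in hk *.
have k0 := ler0n R k.
have -> : 1/2 - sk R k = (4 * (k%:R + 2))^-1.
  by rewrite /sk /uk nS2 nS1; field; apply: lt0r_neq0; lra.
rewrite ger0_norm; last by rewrite invr_ge0; lra.
rewrite -[X in X < _]div1r ltr_pdivrMr; last lra.
have hv : eps * eps^-1 = 1 by rewrite mulfV // gt_eqF.
nra.
Qed.

Lemma cos_per x k : cos (x + TT R * k%:R) = cos x.
Proof.
elim: k => [|k IH]; first by rewrite mulr0 addr0.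
by rewrite nS1 mulrDr mulr1 addrA /TT cosD2pi.
Qed.
Lemma sin_per x k : sin (x + TT R * k%:R) = sin x.
Proof.
elim: k => [|k IH]; first by rewrite mulr0 addr0.
by rewrite nS1 mulrDr mulr1 addrA /TT sinD2pi.
Qed.

Variable q : nat.
Hypothesis hq : (0 < q)%N.

Definition phiq (m : nat) : nat := ((q * m.+1) ^ 2 + m.+1 + m)%N.

Lemma phiq_div : diverges phiq.
Proof.
move=> N; exists N => i hi; rewrite /phiq.
by apply: (leq_trans hi); rewrite addnC leq_addr.
Qed.

Definition dq (m : nat) : R := Num.sqrt ((phiq m).+1%:R) - (q * m.+1)%:R.

Lemma dq_lim : dq @ \oo --> (q%:R : R)^-1.
Proof.
apply/cvgrPdist_lt => eps e0.
have [N _ hN] := nbhs_infty_ger (eps^-1).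
exists N => // m /= hm.
have hk := hN _ hm.
set M : R := m.+1%:R.
set Q : R := (q * m.+1)%:R.
set qq : R := q%:R.
have q1 : 1 <= qq by rewrite /qq ler1n.
have M1 : m%:R + 1 = M by rewrite /M nS1.
have m0 := ler0n R m.
have eQ : Q = qq * M by rewrite /Q natrM.
have eS : ((phiq m).+1%:R : R) = Q ^+ 2 + 2 * M.
  rewrite /phiq -addn1 !natrD natrX /M /Q nS1; ring.
rewrite /dq eS -/Q.
set S := Num.sqrt _.
have S0 : 0 <= S by apply: sqrtr_ge0.
have S2 : S ^+ 2 = Q ^+ 2 + 2 * M by rewrite /S sqr_sqrtr //; rewrite eQ; nra.
have QS : Q <= S.
  rewrite -(@ler_pXn2r _ 2) ?nnegrE // S2; nra.
have hv : eps * eps^-1 = 1 by rewrite mulfV // gt_eqF.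
have qv : qq * qq^-1 = 1 by rewrite mulfV // gt_eqF //; lra.
have qv0 : 0 < qq^-1 by rewrite invr_gt0; lra.
have SQ : S <= Q + qq^-1.
  rewrite -(@ler_pXn2r _ 2) ?nnegrE //; last by rewrite eQ; nra.
  rewrite S2 eQ; nra.
have key : (S - Q) * (S + Q) = 2 * M by nra.
rewrite eQ in key SQ QS.
have Mpos : 0 < M by rewrite -M1; lra.
set D := S - qq * M.
have D0 : 0 <= D by rewrite /D; lra.
have h1 : 2 * M <= D * (2 * (qq * M) + qq^-1).
  rewrite -key; apply: ler_wpM2l => //; rewrite /D; lra.
have h2 : D <= qq^-1 by rewrite /D; lra.
have h3 : qq^-1 <= 1 by nra.
have h4 : 2 * M * (1 - qq * D) <= D * qq^-1.
  have -> : 2 * M * (1 - qq * D) = 2 * M - D * (2 * (qq * M)) by ring.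
  rewrite mulrDr in h1; lra.
have h5 : D * qq^-1 <= 1 by nra.
have h6 : 1 < eps * M * 2.
  have : eps * eps^-1 <= eps * m%:R by apply: ler_wpM2l => //; lra.
  rewrite hv => hh.
  rewrite -M1; nra.
have h7 : 1 - qq * D < eps by nra.
rewrite eQ -/D.
rewrite (_ : qq^-1 - D = qq^-1 * (1 - qq * D)); last by rewrite mulrBr mulr1 mulrA mulVf ?mul1r //; apply: lt0r_neq0; lra.
have h8 : 0 <= 1 - qq * D by nra.
rewrite normrM !ger0_norm ?invr_ge0 ?(ltW qv0) //; nra.
Qed.

End Lims.

Section PtLim.
Variable R : realType.
Variable n : nat.
Variables i0 i1 : 'I_n.
Hypothesis hi : i0 != i1.
Variable q : nat.
Hypothesis hq : (0 < q)%N.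

Definition Pq : 'rV[R]_n :=
  (1/2 : R) *: (cos (TT R / q%:R) *: e0 R i0 + sin (TT R / q%:R) *: e1 R i1).

Lemma pk_phiq m : pk R i0 i1 (phiq q m) =
  sk R (phiq q m) *: (cos (TT R * dq R q m) *: e0 R i0 + sin (TT R * dq R q m) *: e1 R i1).
Proof.
rewrite /pk Rot_e0 //.
have -> : TT R * Num.sqrt ((phiq q m).+1%:R) = TT R * dq R q m + TT R * (q * m.+1)%:R.
  by rewrite /dq; ring.
by rewrite cos_per sin_per.
Qed.

Lemma ang_lim : (fun m => TT R * dq R q m) @ \oo --> TT R / q%:R.
Proof. apply: cvgM; [exact: cvg_cst | exact: dq_lim]. Qed.

Lemma pk_lim : (fun m => pk R i0 i1 (phiq q m)) @ \oo --> Pq.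
Proof.
have -> : (fun m => pk R i0 i1 (phiq q m)) = fun m => sk R (phiq q m) *:
   (cos (TT R * dq R q m) *: e0 R i0 + sin (TT R * dq R q m) *: e1 R i1).
  by apply: funext => m; rewrite pk_phiq.
apply: cvgZ; first exact: (sk_lim (phiq_div q)).
apply: cvgD; apply: cvgZr_tmp.
  exact: (continuous_cvg _ (@continuous_cos R _) ang_lim).
exact: (continuous_cvg _ (@continuous_sin R _) ang_lim).
Qed.

Lemma Nm_Pq : Nm Pq = 1/2.
Proof. by rewrite /Pq NmZ Nm_cs // mulr1 ger0_norm //; lra. Qed.

End PtLim.

Section PqInj.
Variable R : realType.
Variable n : nat.
Variables i0 i1 : 'I_n.
Hypothesis hi : i0 != i1.

Lemma Pq_inj (q1 q2 : nat) : (1 < q1)%N -> (1 < q2)%N ->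
  Pq R i0 i1 q1 = Pq R i0 i1 q2 -> q1 = q2.
Proof.
move=> h1 h2 e.
have : (Pq R i0 i1 q1) ord0 i0 = (Pq R i0 i1 q2) ord0 i0 by rewrite e.
rewrite /Pq !mxE ?eqxx /= ?(negbTE hi) /= !mulr1 !mulr0 !addr0.
have h12 : (1/2 : R) != 0 by apply: lt0r_neq0; lra.
move=> /(mulfI h12) hc.
have hpi := pi_gt0 R.
have inI (q : nat) : (1 < q)%N -> TT R / q%:R \in `[0, pi].
  move=> hq; rewrite in_itv /=; apply/andP; split.
    by apply: divr_ge0; rewrite /TT ?ler0n // mulrn_wge0 // ltW.
  have qq2 : (2 : R) <= q%:R by rewrite ler_nat.
  rewrite ler_pdivrMr; last lra.
  rewrite /TT -mulr_natr; nra.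
have := cos_inj (inI _ h1) (inI _ h2) hc.
have hTT : TT R != 0 by rewrite /TT gt_eqF // mulrn_wgt0.
move=> /(mulfI hTT) /invr_inj /eqP; rewrite eqr_nat => /eqP //.
Qed.

End PqInj.

Lemma within_le (T : topologicalType) (A : set T) (y : T) :
  nbhs y A -> nbhs y --> within A (nbhs y).
Proof.
move=> hA P /= hP; apply: filterS2 hA hP => z az f; exact: f.
Qed.

Lemma cvg_within_ev {T : Type} {U : topologicalType} (F : set_system T) {FF : Filter F}
  (f : T -> U) (A : set U) (l : U) :
  f @ F --> l -> (\forall x \near F, A (f x)) -> f @ F --> within A (nbhs l).
Proof.
move=> hf hA P /= hP.
have := hf _ hP => /= h1.
apply: filterS2 hA h1 => z az f'; exact: f'.
Qed.

Section Glue.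
Variable R : realType.
Variable n : nat.
Variable X : metricType R.
Variable B : set X.
Variables (h : 'rV[R]_n -> X) (g : X -> 'rV[R]_n).
Hypothesis hcont : {within closed_ball_n R n, continuous h}.
Hypothesis gcont : {within B, continuous g}.
Hypothesis himg : h @` closed_ball_n R n = B.
Hypothesis gimg : g @` B `<=` closed_ball_n R n.
Hypothesis ghK : forall x, closed_ball_n R n x -> g (h x) = x.
Hypothesis hgK : forall y, B y -> h (g y) = y.
Hypothesis hopen : open (h @` open_ball_n R n).

Local Notation V := ('rV[R]_n).
Local Notation CB := (closed_ball_n R n).
Definition Kset : set V := [set w | Nm w <= 1/2].

Lemma sq_coord_le (w : V) i : w ord0 i ^+ 2 <= sqnorm w.
Proof.
rewrite /sqnorm (bigD1 i) //= lerDl; apply: sumr_ge0 => j _; exact: sqr_ge0.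
Qed.

Lemma Kset_closed : closed Kset.
Proof.
apply: (@preimage_closed _ _ (@Nm R n) [set r : R | r <= 1/2]).
  by move=> x _; exact: Nm_cont.
exact: closed_le.
Qed.

Lemma Kset_compact : compact Kset.
Proof.
have bc : compact [set v : V | forall i, `[-1, 1]%classic (v ord0 i)].
  exact: (@rV_compact R n (fun _ => `[-1, 1]%classic) (fun _ => @segment_compact R (-1) 1)).
apply: (subclosed_compact Kset_closed bc).
move=> w; rewrite /Kset /Nm /= => hw i.
  have h1 := sq_coord_le w i.
  have h2 : sqnorm w <= 1/4.
    have h0 := sqnorm_ge0 w.
    have hs := sqrtr_ge0 (sqnorm w).
    have e : sqnorm w = (Num.sqrt (sqnorm w))^+2 by rewrite sqr_sqrtr.
    rewrite e; nra.
  rewrite in_itv /=; apply/andP; split; nra.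
Qed.

Lemma Kset_CB w : Kset w -> CB w.
Proof. rewrite /Kset /= => hw; rewrite /closed_ball_n /=; rewrite /Nm in hw; lra. Qed.

Lemma hK_closed : closed (h @` Kset).
Proof.
apply: compact_closed; first exact: metric_hausdorff.
apply: continuous_compact; last exact: Kset_compact.
exact: (continuous_subspaceW Kset_CB hcont).
Qed.

Lemma hCB w : CB w -> B (h w).
Proof. by move=> hw; rewrite -himg; exists w. Qed.
Lemma gB y : B y -> CB (g y).
Proof. by move=> hy; apply: gimg; exists y. Qed.

Section PhiS.
Variable Phi : V -> V.
Hypothesis Phic : forall x, {for x, continuous Phi}.
Hypothesis Phifix : forall w, 1/2 <= Nm w -> Phi w = w.
Hypothesis Phismall : forall w, Nm w <= 1/2 -> Nm (Phi w) <= 1/2.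

Lemma Phi_CB w : CB w -> CB (Phi w).
Proof.
rewrite /closed_ball_n /= => hw.
case: (lerP (Nm w) (1/2)) => h1.
  have := Phismall h1; rewrite /Nm; lra.
by rewrite Phifix //; apply: ltW.
Qed.

Definition glue (y : X) : X := if pselect (B y) then h (Phi (g y)) else y.

Lemma glue_in w : CB w -> glue (h w) = h (Phi w).
Proof.
move=> hw; rewrite /glue; destruct (pselect (B (h w))) as [hb|nB]; first by rewrite ghK.
by exfalso; apply: nB; apply: hCB.
Qed.

Lemma glue_B y : B y -> glue y = h (Phi (g y)).
Proof. by move=> By; rewrite /glue; destruct (pselect (B y)) as [b|b] => //. Qed.
Lemma glue_out y : ~ B y -> glue y = y.
Proof. by move=> nB; rewrite /glue; destruct (pselect (B y)) as [b|b] => //. Qed.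

Lemma glue_id z : ~ (h @` Kset) z -> glue z = z.
Proof.
move=> nz; rewrite /glue; destruct (pselect (B z)) as [Bz|] => //.
have gz := gB Bz.
have nK : ~ Kset (g z) by move=> kz; apply: nz; exists (g z) => //; rewrite hgK.
rewrite Phifix ?hgK //.
by move: nK; rewrite /Kset /= => /negP; rewrite -ltNge => /ltW.
Qed.

Lemma glue_cont : continuous glue.
Proof.
move=> y; rewrite /continuous_at.
case: (pselect ((h @` Kset) y)) => [[w wK wy]|ny]; last first.
  have hn : nbhs y (~` (h @` Kset)).
    by apply: open_nbhs_nbhs; split => //; apply: closed_openC; exact: hK_closed.
  rewrite (glue_id ny).
  apply: cvg_trans (near_eq_cvg _) (cvg_id).
  by apply: filterS hn => z hz; rewrite glue_id.
have wCB := Kset_CB wK.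
have wo : open_ball_n R n w by rewrite /open_ball_n /=; move: wK; rewrite /Kset /Nm /=; lra.
have hU : nbhs y (h @` open_ball_n R n).
  by apply: open_nbhs_nbhs; split => //; exists w.
have UB : h @` open_ball_n R n `<=` B.
  move=> z [v vo <-]; apply: hCB; rewrite /closed_ball_n /=; move: vo; rewrite /open_ball_n /=; lra.
have By : B y by rewrite -wy; apply: hCB.
have hB : nbhs y B by apply: filterS hU.
have s1 : g @ nbhs y --> g y.
  apply: cvg_trans (cvg_app g (within_le hB)) _.
  exact: ((subspace_continuousP _ _).1 gcont y By).
have s2 : (Phi \o g) @ nbhs y --> Phi (g y).
  apply: continuous_cvg; [exact: Phic | exact: s1].
have s3 : (Phi \o g) @ nbhs y --> within CB (nbhs (Phi (g y))).
  apply: cvg_within_ev s2 _.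
  by apply: filterS hB => z bz; apply/Phi_CB/gB.
have s4 : h @ within CB (nbhs (Phi (g y))) --> h (Phi (g y)).
  exact: ((subspace_continuousP _ _).1 hcont _ (Phi_CB (gB By))).
have s5 := cvg_comp _ _ s3 s4.
have -> : glue y = h (Phi (g y)) by rewrite /glue; destruct (pselect (B y)).
apply: cvg_trans (near_eq_cvg _) s5.
by apply: filterS hB => z bz /=; rewrite /glue; destruct (pselect (B z)).
Qed.

End PhiS.
Lemma glueK (Phi Psi : V -> V) : (forall w, Phi (Psi w) = w) ->
  (forall w, CB w -> CB (Psi w)) -> cancel (glue Psi) (glue Phi).
Proof.
move=> PP PsiCB y.
destruct (pselect (B y)) as [By|nBy].
  by rewrite [glue Psi y]glue_B // glue_in ?PP ?hgK //; apply/PsiCB/gB.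
by rewrite !glue_out.
Qed.

Variables i0 i1 : 'I_n.
Hypothesis hi : i0 != i1.

Local Notation F := (@Fm R n i0 i1).
Local Notation G := (@Gm R n i0 i1).

Lemma G_fix w : 1/2 <= Nm w -> G w = w.
Proof. by move=> hw; rewrite -{1}(Fm_fix hi hw) (FmK hi). Qed.

Lemma G_small w : Nm w <= 1/2 -> Nm (G w) <= 1/2.
Proof.
move=> hw; case: (lerP (Nm (G w)) (1/2)) => // hlt.
have := Fm_fix hi (ltW hlt); rewrite (GmK hi) => e.
by move: hlt; rewrite -e => hlt; lra.
Qed.

Lemma F_small w : Nm w <= 1/2 -> Nm (F w) <= 1/2.
Proof. exact: Fm_small. Qed.

Lemma F_CB w : CB w -> CB (F w).
Proof. apply: Phi_CB; [exact: Fm_fix | exact: F_small]. Qed.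
Lemma G_CB w : CB w -> CB (G w).
Proof. apply: Phi_CB; [exact: G_fix | exact: G_small]. Qed.

Definition ff := glue F.
Definition fi := glue G.

Lemma ff_cont : continuous ff.
Proof.
exact: (@glue_cont F (@Fm_cont R n i0 i1) (fun w => @Fm_fix R n i0 i1 hi w) F_small).
Qed.
Lemma fi_cont : continuous fi.
Proof.
exact: (@glue_cont G (@Gm_cont R n i0 i1) G_fix G_small).
Qed.
Lemma ffK : cancel ff fi.
Proof. apply: glueK; [exact: (FmK hi) | exact: F_CB]. Qed.
Lemma fiK : cancel fi ff.
Proof. apply: glueK; [exact: (GmK hi) | exact: G_CB]. Qed.

Lemma pk_K k : Kset (pk R i0 i1 k).
Proof.
rewrite /Kset /= Nm_pk //; have /andP[_ hh] := sk_in R k; exact: ltW.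
Qed.
Lemma pk_CB k : CB (pk R i0 i1 k).
Proof. exact/Kset_CB/pk_K. Qed.

Definition x0 : X := h (pk R i0 i1 0).

Lemma iter_ff k : iter k ff x0 = h (pk R i0 i1 k).
Proof.
elim: k => // k IH; rewrite iterS IH /ff glue_in ?Fm_pk //; exact: pk_CB.
Qed.

Lemma omega_Pq q : (0 < q)%N -> omega_lim ff x0 (h (Pq R i0 i1 q)).
Proof.
move=> hq; exists (phiq q); split; first exact: phiq_div.
have -> : (fun i => iter (phiq q i) ff x0) = h \o (fun i => pk R i0 i1 (phiq q i)).
  by apply: funext => i; rewrite iter_ff.
have PCB : CB (Pq R i0 i1 q) by rewrite /closed_ball_n /= -/(Nm _) Nm_Pq //; lra.
apply: cvg_comp; last exact: ((subspace_continuousP _ _).1 hcont _ PCB).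
apply: cvg_within_ev; first exact: pk_lim.
by apply: nearW => i; exact: pk_CB.
Qed.

Lemma omega_fix y : omega_lim ff x0 y -> ff y = y.
Proof.
move=> [phi [hphi hconv]].
have e : (fun i => iter (phi i) ff x0) = h \o (fun i => pk R i0 i1 (phi i)).
  by apply: funext => i; rewrite iter_ff.
rewrite e in hconv.
have yK : (h @` Kset) y.
  apply: (closed_cvg (h @` Kset) hK_closed _ y hconv).
  by apply: nearW => i; exists (pk R i0 i1 (phi i)) => //; exact: pk_K.
case: yK => w wK wy.
have wCB := Kset_CB wK.
have By : B y by rewrite -wy; apply: hCB.
have hg : (g \o (h \o (fun i => pk R i0 i1 (phi i)))) @ \oo --> g y.
  apply: cvg_comp; last exact: ((subspace_continuousP _ _).1 gcont _ By).
  apply: cvg_within_ev; first exact: hconv.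
  by apply: nearW => i /=; apply: hCB; exact: pk_CB.
have e2 : (g \o (h \o (fun i => pk R i0 i1 (phi i)))) = (fun i => pk R i0 i1 (phi i)).
  by apply: funext => i /=; rewrite ghK //; exact: pk_CB.
rewrite e2 -wy ghK // in hg.
have l1 : (@Nm R n \o (fun i => pk R i0 i1 (phi i))) @ \oo --> Nm w.
  apply: continuous_cvg; [exact: Nm_cont | exact: hg].
have e3 : (@Nm R n \o (fun i => pk R i0 i1 (phi i))) = (fun i => sk R (phi i)).
  by apply: funext => i /=; rewrite Nm_pk.
rewrite e3 in l1.
have l2 := @sk_lim R phi hphi.
have eN : Nm w = 1/2.
  by rewrite -(cvg_lim (@Rhausdorff R) l1) (cvg_lim (@Rhausdorff R) l2).
by rewrite -wy /ff glue_in // Fm_fix // eN.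
Qed.

Lemma omega_inf : ~ finite_set (omega_lim ff x0).
Proof.
apply/infiniteP.
have : $|{injfun [set: nat] >-> omega_lim ff x0}|.
  apply/injfunPex; exists (fun q => h (Pq R i0 i1 q.+2)).
    by move=> q _; apply: omega_Pq.
  move=> a b _ _ /= e.
  have CBa : CB (Pq R i0 i1 a.+2) by rewrite /closed_ball_n /= -/(Nm _) Nm_Pq //; lra.
  have CBb : CB (Pq R i0 i1 b.+2) by rewrite /closed_ball_n /= -/(Nm _) Nm_Pq //; lra.
  have := congr1 g e; rewrite !ghK // => /(Pq_inj hi) => /(_ isT isT) [].
  done.
by case=> Fi; exact: inj_card_le Fi.
Qed.

End Glue.

Unset Implicit Arguments.
Theorem theorem1p5 (R : realType) (X : metricType R) (n : nat) (B : set X) :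
  compact [set: X] -> (2 <= n)%N -> free_ball R n B ->
  (exists (f : X -> X) (x : X),
      [/\ self_homeo f, ~ finite_set (omega_lim f x) &
          forall y, omega_lim f x y -> f y = y])
  /\ ~ omega_FTP X.
Proof.
move=> cX hn [h [[g [hcont gcont [himg gimg] ghK hgK]] hopen]].
have h0 : (0 < n)%N by apply: leq_trans hn.
have h1 : (1 < n)%N by [].
pose i0 := Ordinal h0; pose i1 := Ordinal h1.
have hi : i0 != i1 by [].
have fc := ff_cont hcont gcont himg gimg hgK hopen hi.
have fic := fi_cont hcont gcont himg gimg hgK hopen hi.
have hfix := @omega_fix _ _ _ _ _ _ hcont gcont himg ghK _ _ hi.
have hinf := omega_inf hcont himg ghK hi.
split.
  exists (ff B h g i0 i1), (x0 h i0 i1); split => //.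
  exists (fi B h g i0 i1); split.
  - exact: fc.
  - exact: fic.
  - exact: (ffK himg gimg ghK hgK hi).
  - exact: (fiK himg gimg ghK hgK hi).
move=> hF; apply: hinf; apply: (hF _ fc) => y hy; exists 1%N; split => //=.
exact: hfix.
Qed.
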